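(* Let $c$ and $n$ be odd positive integers with $n>c$, and set $N=n-c-1$. There is a bijection between standard Young tableaux of shape with $2$ rows and $N$ columns and lattice paths in an $N\times N$ grid from the top-left corner to the bottom-right corner, using unit right and down steps and never going strictly below the diagonal joining these two corners, such that the parity of the number of unit squares of the grid lying above the path equals the parity of the Latin reading word of the corresponding tableau.
   Context: Young tableaux are standard, in English notation, with entries $1,\ldots,2N$. The Latin reading word of a tableau is obtained by reading its entries row by row from top to bottom, each row left to right; its parity is its sign as a permutation of $\{1,\ldots,2N\}$. *)

(* Defs.v *)
From mathcomp Require Import all_boot all_order all_fingroup.
Set Implicit Arguments. Unset Strict Implicit. Unset Printing Implicit Defensive.

(* ---------- Standard Young tableaux of shape (N,N) ----------
   A filling of the 2 x N rectangle with 1..2N, each used once, is encoded by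
   its Latin reading word: a permutation w of 'I_(2N) such that the cell in
   row i (0 or 1, top to bottom) and column j (0..N-1, left to right), i.e. the
   cell at reading position i*N + j, contains the entry (w (i*N+j)) + 1.
   (Entries are shifted by one: 0..2N-1 stand for 1..2N; this does not affect
   comparisons nor the sign of the reading word.) *)

(* entry at reading position k (0 outside the range, never used there) *)
Definition ent (N : nat) (w : {perm 'I_(N.*2)}) (k : nat) : nat :=
  odflt 0 (omap (fun x : 'I_(N.*2) => val (w x)) (insub k)).

Definition cell (N : nat) (w : {perm 'I_(N.*2)}) (i j : nat) : nat :=
  ent w (i * N + j).

Definition is_syt (N : nat) (w : {perm 'I_(N.*2)}) : bool :=
  [forall i : 'I_2, forall j : 'I_N, (j.+1 < N) ==> (cell w i j < cell w i j.+1)]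
  && [forall j : 'I_N, cell w 0 j < cell w 1 j].

Definition syt (N : nat) := {w : {perm 'I_(N.*2)} | is_syt w}.

Definition reading_parity (N : nat) (T : syt N) : bool := odd_perm (val T).

(* ---------- Lattice paths in the N x N grid ----------
   A path from the top-left to the bottom-right corner is a word of 2N steps,
   true = unit step right, false = unit step down, with exactly N right steps.
   After a prefix, the path is at (#right steps) to the right and (#down steps)
   below the start; the diagonal joining the two corners is where these agree,
   and the path is strictly below it iff #down > #right. *)
Definition nright (s : seq bool) := count id s.
Definition ndown (s : seq bool) := count negb s.

Definition is_path_above (N : nat) (s : (N.*2).-tuple bool) : bool :=
  (nright s == N) &&
  [forall k : 'I_(N.*2).+1, ndown (take k s) <= nright (take k s)].

Definition gpath (N : nat) := {s : (N.*2).-tuple bool | is_path_above s}.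

(* number of unit squares of the grid above the path: a right step taken
   after d down steps has exactly d squares of its column above it *)
Definition area (N : nat) (s : (N.*2).-tuple bool) : nat :=
  \sum_(i < N.*2 | tnth s i) ndown (take i s).

(* Main.v *)
Require Import Defs.
From mathcomp Require Import all_boot all_order all_fingroup.
From mathcomp Require Import zify.
Set Implicit Arguments. Unset Strict Implicit. Unset Printing Implicit Defensive.
Set Implicit Arguments. Unset Strict Implicit. Unset Printing Implicit Defensive.
Lemma mono_gen (a : nat -> nat) N :
  (forall j, j.+1 < N -> a j < a j.+1) ->
  forall y x, x < N -> y < x -> a y < a x.
Proof.
move=> h y x; elim: x => // x IH hx hyx.
have hxN : x < N by lia.
rewrite ltnS leq_eqVlt in hyx; case/orP: hyx => [/eqP -> | hyx]; first exact: h.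
exact: ltn_trans (IH hxN hyx) (h _ hx).
Qed.

Lemma mono_iff (a : nat -> nat) N :
  (forall j, j.+1 < N -> a j < a j.+1) ->
  forall y x, y < N -> x < N -> (a y < a x) = (y < x).
Proof.
move=> h y x hy hx; case: (ltngtP y x) => [lt|lt|->].
- exact: (@mono_gen a N h y x hx lt).
- by apply/negbTE; rewrite -leqNgt; apply: ltnW; exact: (@mono_gen a N h x y hy lt).
- by rewrite ltnn.
Qed.

Lemma count_take (s : seq bool) (a : pred bool) k : k <= size s ->
  count a (take k s) = \sum_(0 <= m < k) a (nth false s m).
Proof.
elim: s k => [|x s IH] [|k] //=; try by rewrite big_geq.
move=> hk; rewrite big_nat_recl // IH //.
Qed.

Lemma sum_lt_cond n q (c : nat -> bool) : q <= n ->
  \sum_(p < n) ((p < q) && c p) = \sum_(0 <= p < q) c p.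
Proof.
move=> hq; rewrite -(big_mkord xpredT (fun p => nat_of_bool ((p < q) && c p))).
rewrite (@big_cat_nat _ _ _ q) //=.
have -> : \sum_(q <= i < n) ((i < q) && c i) = 0.
  by rewrite big_nat_cond big1 // => i /andP [/andP [h _] _]; rewrite ltnNge h.
by rewrite addn0; apply: eq_big_nat => p /andP [_ ->].
Qed.

Definition sv n (s : {perm 'I_n}) (x : nat) : nat :=
  odflt 0 (omap (fun o : 'I_n => val (s o)) (insub x)).

Lemma svE n (s : {perm 'I_n}) (x : 'I_n) : sv s x = s x.
Proof. by rewrite /sv valK. Qed.

Lemma sv_lt n (s : {perm 'I_n}) x : x < n -> sv s x < n.
Proof. by move=> hx; rewrite (svE s (Ordinal hx)). Qed.

Definition inv n (s : {perm 'I_n}) :=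
  \sum_(p : 'I_n) \sum_(q : 'I_n) ((p < q) && (s q < s p)).

Lemma no_descent_id n (s : {perm 'I_n}) :
  (forall i, i.+1 < n -> sv s i < sv s i.+1) -> s = 1%g.
Proof.
move=> h; apply/permP => x; apply: val_inj; rewrite perm1 /= -svE.
have ge : forall y, y < n -> y <= sv s y.
  elim=> // y IH hy; exact: leq_ltn_trans (IH (ltnW hy)) (h _ hy).
have le : forall d y, y + d < n -> sv s y + d <= sv s (y + d).
  move=> d y; elim: d => [|d IH] hd; first by rewrite !addn0.
  rewrite addnS in hd *; have := IH (ltnW hd); have := h _ hd; lia.
have hx := ltn_ord x.
have h1 := le (n - x.+1) x ltac:(lia).
have h2 := sv_lt s (ltac:(lia) : x + (n - x.+1) < n).
have := ge x hx; lia.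
Qed.

Lemma odd_perm_inv n (s : {perm 'I_n}) : odd_perm s = odd (inv s).
Proof.
have [m] := ubnP (inv s); elim: m s => // m IH s hs.
case: (pickP (fun i : 'I_n => (i.+1 < n) && (sv s i.+1 < sv s i))) =>
  [i /andP [hi hd] | hno].
- pose i1 := Ordinal hi; pose t := tperm i i1.
  have hd' : s i1 < s i by rewrite -!svE.
  have key : forall p q : 'I_n, ((p < q) && (s q < s p)) =
     ((t p < t q) && (s q < s p)) + ((p == i) && (q == i1)) :> nat.
    move=> p q; rewrite /t; set B := (s q < s p).
    have eB : B = (s q < s p) by []. clearbody B. move: eB.
    have hd2 : (s i < s i1) = false by apply/negbTE; rewrite -leqNgt ltnW.
    case: tpermP => [->|->|/eqP np0 /eqP np1]; case: tpermP => [->|->|/eqP nq0 /eqP nq1];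
      rewrite ?hd' ?hd2 => eB; try subst B.
    all: try rewrite -?val_eqE /= in np0 np1.
    all: try rewrite -?val_eqE /= in nq0 nq1.
    all: rewrite -?val_eqE /=.
    1-9: try (case: B {eB}); lia.
  have Einv : inv s = (inv (t * s)%g).+1.
    have -> : inv (t * s)%g = \sum_(p : 'I_n) \sum_(q : 'I_n) ((t p < t q) && (s q < s p)).
      rewrite /inv (reindex_inj (@perm_inj _ t)); apply: eq_bigr => p _.
      rewrite (reindex_inj (@perm_inj _ t)); apply: eq_bigr => q _.
      by rewrite !permM !tpermK.
    rewrite /inv (eq_bigr (fun p => \sum_q ((t p < t q) && (s q < s p)) + \sum_(q : 'I_n) ((p == i) && (q == i1)))); last first.
      by move=> p _; rewrite -big_split; apply: eq_bigr => q _; apply: key.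
    rewrite big_split /= [X in _ + X](bigD1 i) //= [X in _ + (X + _)](bigD1 i1) //=.
    rewrite !eqxx /=.
    have h1 : \sum_(q < n | q != i1) (q == i1) = 0.
      by rewrite big1 // => q hq; rewrite (negbTE hq).
    have h2 : \sum_(p < n | p != i) \sum_(q < n) ((p == i) && (q == i1)) = 0.
      by rewrite big1 // => p hp; rewrite (negbTE hp) big1.
    rewrite h1 h2.
    by rewrite !addn0 addn1.
  have ne : i != i1 by rewrite -val_eqE /= neq_ltn ltnSn.
  have hs' : inv (t * s)%g < m by rewrite -ltnS -Einv.
  have e : s = (t * (t * s))%g by rewrite mulgA tperm2 mul1g.
  by rewrite {1}e odd_mul_tperm ne IH // Einv.
- have -> : s = 1%g.
    apply: no_descent_id => j hj.
    have := hno (Ordinal (ltnW hj)); rewrite /= hj /= => /negbT; rewrite -leqNgt.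
    rewrite leq_eqVlt => /orP [/eqP e|//]; exfalso.
    move: e; rewrite (svE s (Ordinal (ltnW hj))) (svE s (Ordinal hj)) => /val_inj/perm_inj.
    by move/(congr1 val) => /= /eqP; rewrite eqn_leq ltnn andbF.
  rewrite odd_perm1 /inv big1 // => p _; rewrite big1 // => q _; rewrite !perm1.
  by case: ltngtP.
Qed.
Definition cnt (c : nat -> bool) k := \sum_(0 <= m < k) c m.

Lemma cnt_split c p q : p <= q -> cnt c q = cnt c p + \sum_(p <= m < q) c m.
Proof. by move=> h; rewrite /cnt (@big_cat_nat _ _ _ p). Qed.

Lemma cnt_mono c p q : p <= q -> cnt c p <= cnt c q.
Proof. by move=> h; rewrite (cnt_split c h) leq_addr. Qed.

Lemma cnt_lt c p q : p < q -> cnt c p + c p <= cnt c q.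
Proof.
by move=> h; rewrite (cnt_split c (ltnW h)) big_ltn // addnA leq_addr.
Qed.

Lemma cntS c k : cnt c k.+1 = cnt c k + c k.
Proof. by rewrite /cnt big_nat_recr. Qed.

Lemma cnt_true k : cnt (fun _ => true) k = k.
Proof. by elim: k => [|k IH]; rewrite ?cntS ?IH ?addn1 // /cnt big_geq. Qed.

Lemma cnt_compl b k : cnt b k + cnt (fun m => ~~ b m) k = k.
Proof.
elim: k => [|k IH]; first by rewrite /cnt !big_geq.
rewrite !cntS; case: (b k) => /=; lia.
Qed.

Definition pos N (b : nat -> bool) k :=
  if b k then cnt b k else N + cnt (fun m => ~~ b m) k.

Section PosFacts.
Variables (N : nat) (b : nat -> bool).
Hypothesis hT : cnt b N.*2 = N.
Hypothesis hD : forall k, k <= N.*2 -> cnt (fun m => ~~ b m) k <= cnt b k.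

Lemma hF : cnt (fun m => ~~ b m) N.*2 = N.
Proof. have := cnt_compl b N.*2; rewrite hT -addnn; lia. Qed.

Lemma posT_lt a : a < N.*2 -> b a -> cnt b a < N.
Proof. by move=> ha hb; have := cnt_lt b ha; rewrite hT hb addn1. Qed.

Lemma posF_lt a : a < N.*2 -> ~~ b a -> cnt (fun m => ~~ b m) a < N.
Proof. by move=> ha hb; have := cnt_lt (fun m => ~~ b m) ha; rewrite hF hb addn1. Qed.

Lemma pos_ltN a : a < N.*2 -> (pos N b a < N) = b a.
Proof.
move=> ha; rewrite /pos; case hb: (b a); first exact: posT_lt.
by apply/negbTE; rewrite -leqNgt leq_addr.
Qed.

Lemma pos_lt a : a < N.*2 -> pos N b a < N.*2.
Proof.
move=> ha; rewrite /pos; case hb: (b a).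
  have := posT_lt ha hb; lia.
have := posF_lt ha (negbT hb); lia.
Qed.

Lemma pos_inv p q : p < q -> q < N.*2 -> (pos N b q < pos N b p) = b q && ~~ b p.
Proof.
move=> hpq hq; have hp : p < N.*2 by lia.
rewrite /pos; case hbp: (b p); case hbq: (b q) => /=.
- have := cnt_lt b hpq; rewrite hbp; lia.
- have := posT_lt hp hbp; lia.
- have := posT_lt hq hbq; lia.
- have := cnt_lt (fun m => ~~ b m) hpq; rewrite hbp /=; lia.
Qed.

Lemma pos_neq p q : p < q -> q < N.*2 -> pos N b p != pos N b q.
Proof.
move=> hpq hq; have hp : p < N.*2 by lia.
rewrite /pos; case hbp: (b p); case hbq: (b q) => /=.
- have := cnt_lt b hpq; rewrite hbp; lia.
- have := posT_lt hp hbp; lia.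
- have := posT_lt hq hbq; lia.
- have := cnt_lt (fun m => ~~ b m) hpq; rewrite hbp /=; lia.
Qed.

Lemma pos_inj p q : p < N.*2 -> q < N.*2 -> pos N b p = pos N b q -> p = q.
Proof.
move=> hp hq e; case: (ltngtP p q) => // h.
- by move: (pos_neq h hq); rewrite e eqxx.
- by move: (pos_neq h hp); rewrite e eqxx.
Qed.

End PosFacts.
Definition bs N (s : (N.*2).-tuple bool) : nat -> bool := fun m => nth false s m.

Lemma path_facts N (s : (N.*2).-tuple bool) : is_path_above s ->
  cnt (bs s) N.*2 = N /\
  forall k, k <= N.*2 -> cnt (fun m => ~~ bs s m) k <= cnt (bs s) k.
Proof.
case/andP => /eqP hr /forallP hk; split.
  by rewrite -[RHS]hr /nright -(take_size s) count_take size_tuple.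
move=> k hk'; have := hk (Ordinal (hk' : k < N.*2.+1)).
by rewrite /ndown /nright /= !count_take ?size_tuple.
Qed.

Lemma sum_split_NN N (F : nat -> nat) :
  \sum_(0 <= x < N.*2) F x = \sum_(0 <= x < N) F x + \sum_(0 <= y < N) F (y + N).
Proof.
rewrite -addnn (@big_cat_nat _ _ _ N) ?leq_addr //=; congr (_ + _).
by rewrite -{1}(add0n N) big_addn addnK.
Qed.

Lemma sum_ltx N x : x <= N -> \sum_(0 <= y < N) (y < x) = x.
Proof.
move=> hx; rewrite big_mkord.
rewrite (eq_bigr (fun y : 'I_N => nat_of_bool ((y < x) && true))); last by move=> y _; rewrite andbT.
by rewrite (sum_lt_cond (fun _ => true) hx); apply: cnt_true.
Qed.

Lemma sv_reidx n (w : {perm 'I_n}) (P : nat -> nat -> bool) :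
  \sum_(m < n) P m (sv (w^-1)%g m) = \sum_(x < n) P (sv w x) x.
Proof.
rewrite (reindex_inj (@perm_inj _ w)); apply: eq_bigr => x _.
by rewrite !svE permK.
Qed.

Lemma svK n (w : {perm 'I_n}) x : x < n -> sv (w^-1)%g (sv w x) = x.
Proof. by move=> hx; rewrite (svE w (Ordinal hx)) svE permK. Qed.

Section SytFacts.
Variables (N : nat) (w : {perm 'I_(N.*2)}).
Hypothesis hw : is_syt w.
Let E := sv w.
Let b m := sv (w^-1)%g m < N.

Lemma entE k : ent w k = E k. Proof. by []. Qed.

Lemma sytA j : j.+1 < N -> E j < E j.+1.
Proof.
move=> hj; case/andP: hw => /forallP hr _.
have := forallP (hr ord0) (Ordinal (ltnW hj)).
by rewrite /cell /= mul0n add0n hj.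
Qed.

Lemma sytB j : j.+1 < N -> E (j + N) < E (j.+1 + N).
Proof.
move=> hj; case/andP: hw => /forallP hr _.
have := forallP (hr (@Ordinal 2 1 isT)) (Ordinal (ltnW hj)).
by rewrite /cell /= mul1n hj /= ![N + _]addnC addSn.
Qed.

Lemma sytC j : j < N -> E j < E (j + N).
Proof.
move=> hj; case/andP: hw => _ /forallP hc.
have := hc (Ordinal hj).
by rewrite /cell /= mul0n mul1n add0n addnC.
Qed.

Lemma cntT_syt k : k <= N.*2 -> cnt b k = \sum_(0 <= x < N) (E x < k).
Proof.
move=> hk; rewrite /cnt -(sum_lt_cond b hk).
have := sv_reidx w (fun m y => (m < k) && (y < N)); rewrite /= => ->.
rewrite -(big_mkord xpredT (fun x => nat_of_bool ((sv w x < k) && (x < N)))).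
rewrite sum_split_NN [X in _ + X]big1 ?addn0; last by move=> y _; rewrite (ltnNge (y + N) N) leq_addl andbF.
by apply: eq_big_nat => x /andP [_ ->]; rewrite andbT.
Qed.

Lemma cntF_syt k : k <= N.*2 ->
  cnt (fun m => ~~ b m) k = \sum_(0 <= y < N) (E (y + N) < k).
Proof.
move=> hk; rewrite /cnt -(sum_lt_cond (fun m => ~~ b m) hk).
have := sv_reidx w (fun m y => (m < k) && ~~ (y < N)); rewrite /= => ->.
rewrite -(big_mkord xpredT (fun x => nat_of_bool ((sv w x < k) && ~~ (x < N)))).
rewrite sum_split_NN big_nat_cond big1 ?add0n; last by move=> y /andP [/andP [_ hy] _]; rewrite hy andbF.
by apply: eq_big_nat => y _; rewrite (ltnNge (y + N) N) leq_addl andbT.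
Qed.

Lemma syt_hT : cnt b N.*2 = N.
Proof.
rewrite cntT_syt //; transitivity (\sum_(0 <= x < N) (x < N)); last exact: sum_ltx.
by apply: eq_big_nat => x /andP [_ hx]; rewrite hx sv_lt //; lia.
Qed.

Lemma syt_hD k : k <= N.*2 -> cnt (fun m => ~~ b m) k <= cnt b k.
Proof.
move=> hk; rewrite cntF_syt // cntT_syt // !big_mkord; apply: leq_sum => y _.
have := sytC (ltn_ord y); lia.
Qed.

Lemma syt_pos x : x < N.*2 -> pos N b (E x) = x.
Proof.
move=> hx2; have hb : b (E x) = (x < N) by rewrite /b svK.
rewrite /pos hb; case: (ltnP x N) => hx.
  rewrite cntT_syt; last exact: ltnW (sv_lt w hx2).
  rewrite -[RHS](sum_ltx (ltnW hx)); apply: eq_big_nat => y /andP [_ hy].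
  by rewrite (@mono_iff E N sytA y x hy hx).
have [y ey] : exists y, x = y + N by exists (x - N); rewrite subnK.
subst x; have hy : y < N by move: hx2; rewrite -addnn; lia.
rewrite cntF_syt; last exact: ltnW (sv_lt w hx2).
rewrite addnC; congr (_ + _); rewrite -[RHS](sum_ltx (ltnW hy)); apply: eq_big_nat => z /andP [_ hz].
by rewrite (@mono_iff (fun z => E (z + N)) N sytB z y hz hy).
Qed.

End SytFacts.
Lemma cnt_ext (c1 c2 : nat -> bool) k :
  (forall m, m < k -> c1 m = c2 m) -> cnt c1 k = cnt c2 k.
Proof. by move=> h; apply: eq_big_nat => m /andP [_ hm]; rewrite h. Qed.

Lemma pos_ext N (b1 b2 : nat -> bool) k :
  (forall m, m <= k -> b1 m = b2 m) -> pos N b1 k = pos N b2 k.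
Proof.
move=> h; rewrite /pos h //.
rewrite (@cnt_ext b1 b2) => [|m hm]; last by apply: h; apply: ltnW.
by rewrite (@cnt_ext (fun m => ~~ b1 m) (fun m => ~~ b2 m)) // => m hm; rewrite h // ltnW.
Qed.

Definition fpath N (w : {perm 'I_(N.*2)}) : (N.*2).-tuple bool :=
  [tuple (val ((w^-1)%g k) < N) | k < N.*2].

Lemma bs_fpath N (w : {perm 'I_(N.*2)}) m : m < N.*2 ->
  bs (fpath w) m = (sv (w^-1)%g m < N).
Proof.
move=> hm; rewrite /bs.
have -> : nth false (fpath w) m = tnth (fpath w) (Ordinal hm) by rewrite (tnth_nth false).
by rewrite tnth_mktuple (svE _ (Ordinal hm)).
Qed.

Lemma f_path N (w : {perm 'I_(N.*2)}) : is_syt w -> is_path_above (fpath w).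
Proof.
move=> hw; apply/andP; split.
  rewrite /nright -(take_size (fpath w)) count_take size_tuple //.
  apply/eqP; apply: etrans (syt_hT hw).
  by apply: (@cnt_ext (fun m => nth false (fpath w) m)) => m hm; exact: bs_fpath.
apply/forallP => k; have hk : k <= N.*2 by rewrite -ltnS.
rewrite /ndown /nright !count_take ?size_tuple //.
suff : cnt (fun m => ~~ nth false (fpath w) m) k <= cnt (fun m => nth false (fpath w) m) k by [].
rewrite (@cnt_ext (fun m => ~~ nth false (fpath w) m) (fun m => ~~ (sv (w^-1)%g m < N))); last first.
  by move=> m hm; rewrite -(bs_fpath w) //; apply: leq_trans hk.
rewrite (@cnt_ext (fun m => nth false (fpath w) m) (fun m => (sv (w^-1)%g m < N))).
  exact: syt_hD.
by move=> m hm; rewrite -(bs_fpath w) //; apply: leq_trans hk.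
Qed.

Definition posf N (s : gpath N) (k : 'I_(N.*2)) : 'I_(N.*2) :=
  insubd k (pos N (bs (val s)) k).

Lemma posf_val N (s : gpath N) k : val (posf s k) = pos N (bs (val s)) k.
Proof.
have [hT _] := path_facts (valP s).
by rewrite /posf insubdK //; exact: (pos_lt hT (ltn_ord k)).
Qed.

Lemma posf_inj N (s : gpath N) : injective (posf s).
Proof.
have [hT _] := path_facts (valP s).
move=> x y e; apply: val_inj; apply: (pos_inj hT (ltn_ord x) (ltn_ord y)).
by rewrite -!posf_val e.
Qed.

Definition Uperm N (s : gpath N) : {perm 'I_(N.*2)} := perm (@posf_inj N s).

Lemma UpermE N (s : gpath N) k : (Uperm s k : nat) = pos N (bs (val s)) k.
Proof. by rewrite permE posf_val. Qed.

Lemma row_lt N (b : nat -> bool) a a' :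
  b a = b a' -> pos N b a' = (pos N b a).+1 -> a < a'.
Proof.
move=> hb e; rewrite ltnNge; apply/negP => h; move: e; rewrite /pos -hb.
case: (b a).
  have := cnt_mono b h; lia.
have := cnt_mono (fun m => ~~ b m) h; lia.
Qed.

Lemma g_syt N (s : gpath N) : is_syt (Uperm s)^-1.
Proof.
have [hT hD] := path_facts (valP s).
set u := Uperm s; set b := bs (val s).
have hE : forall x, x < N.*2 -> pos N b (sv u^-1 x) = x /\ sv u^-1 x < N.*2.
  move=> x hx; rewrite (svE _ (Ordinal hx)) -UpermE permKV; split => //.
have hb : forall x, x < N.*2 -> b (sv u^-1 x) = (x < N).
  move=> x hx; have [e1 e2] := hE x hx; have h := pos_ltN hT e2; rewrite e1 in h; exact: (esym h).
apply/andP; split.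
  apply/forallP => i; apply/forallP => j; apply/implyP => hj.
  change (sv u^-1 (i * N + j) < sv u^-1 (i * N + j.+1)).
  case: i => [[|[|//]] hi] /=.
    rewrite !mul0n !add0n; apply: (@row_lt N b).
      by rewrite !hb ?hj ?(ltnW hj) //; lia.
    have [e1 _] := hE j ltac:(lia); have [e2 _] := hE j.+1 ltac:(lia).
    by rewrite e1 e2.
  rewrite !mul1n; apply: (@row_lt N b).
    rewrite !hb; lia. 
  have [e1 _] := hE (N + j) ltac:(lia); have [e2 _] := hE (N + j.+1) ltac:(lia).
  by rewrite e1 e2 addnS.
apply/forallP => j; change (sv u^-1 (0 * N + j) < sv u^-1 (1 * N + j)).
rewrite mul0n mul1n add0n.
have hj := ltn_ord j.
have [e1 l1] := hE j ltac:(lia); have [e2 l2] := hE (N + j) ltac:(lia).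
have b1 := hb j ltac:(lia); have b2 := hb (N + j) ltac:(lia).
move: e1 e2 b1 b2; set a := sv u^-1 j; set a' := sv u^-1 (N + j).
rewrite /pos => e1 e2 b1 b2.
rewrite hj in b1; rewrite ltnNge leq_addr /= in b2.
rewrite b1 in e1; rewrite b2 in e2.
have hd := hD a'.+1 l2; rewrite !cntS -/b b2 /= in hd.
rewrite ltnNge; apply/negP => h; have := cnt_mono b h; lia.
Qed.

Definition gfun N (s : gpath N) : syt N := exist _ (Uperm s)^-1%g (g_syt s).
Definition ffun N (T : syt N) : gpath N := exist _ (fpath (val T)) (f_path (valP T)).

Lemma fg N (s : gpath N) : ffun (gfun s) = s.
Proof.
have [hT _] := path_facts (valP s).
apply: val_inj => /=; apply: eq_from_tnth => k.
by rewrite tnth_mktuple invgK /= UpermE (pos_ltN hT (ltn_ord k)) (tnth_nth false).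
Qed.

Lemma Uperm_f N (T : syt N) : Uperm (ffun T) = (val T)^-1%g.
Proof.
apply/permP => m; apply: val_inj => /=; rewrite UpermE /=.
set w := val T.
have := syt_pos (valP T) (ltn_ord (w^-1 m)%g).
rewrite svE permKV => <-.
apply: pos_ext => k hk; apply: bs_fpath; apply: leq_ltn_trans hk (ltn_ord m).
Qed.

Lemma gf N (T : syt N) : gfun (ffun T) = T.
Proof. by apply: val_inj => /=; rewrite Uperm_f invgK. Qed.

Lemma area_odd N (s : gpath N) : odd (area (val s)) = odd_perm (Uperm s).
Proof.
have [hT _] := path_facts (valP s).
set b := bs (val s).
rewrite odd_perm_inv; congr odd.
transitivity (\sum_(q < N.*2) b q * cnt (fun m => ~~ b m) q).
  rewrite /area big_mkcond; apply: eq_bigr => i _.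
  rewrite (tnth_nth false) /ndown count_take ?size_tuple ?(ltnW (ltn_ord i)) //.
  by rewrite /b /bs; case: (nth false _ i); rewrite ?mul1n ?mul0n.
rewrite /inv exchange_big; apply: eq_bigr => q _ /=.
rewrite (eq_bigr (fun p : 'I_N.*2 => nat_of_bool ((p < q) && (b q && ~~ b p)))); last first.
  move=> p _; case: (ltnP p q) => h //=.
  by rewrite !UpermE (pos_inv hT h (ltn_ord q)).
case hbq: (b q) => /=.
  by rewrite mul1n (sum_lt_cond (fun p => ~~ b p) (ltnW (ltn_ord q))).
by rewrite mul0n big1 // => p _; rewrite andbF.
Qed.

Theorem lemma2p18 (c n : nat) :
  odd c -> odd n -> 0 < c -> c < n ->
  let N := n - c - 1 in
  exists f : syt N -> gpath N,
    bijective f /\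
    forall T : syt N, odd (area (val (f T))) = reading_parity T.
Proof.
move=> _ _ _ _ N; exists (@ffun N); split.
  by exists (@gfun N) => x; [apply: gf | apply: fg].
move=> T; by rewrite area_odd /reading_parity -[in RHS](gf T) /= odd_permV.
Qed.
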